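(* Consider the iteration: start from any $(\underline p^{(0)},\underline\psi^{(0)})\in\mathcal F$; at step $t$, set $\mu^{(t)}_{lk}=\beta_{llk}\sqrt{p^{(t)}_{lk}}\,D_l^{-1}\psi^{(t)}_{lk}$ (with $D_l$ evaluated at $(\underline p^{(t)},\underline\psi^{(t)})$), and then let $(\underline p^{(t+1)},\underline\psi^{(t+1)})$ be a maximizer of $f(\cdot,\cdot,\underline\mu^{(t)})$ over $\mathcal F$. Then the weighted sum MSE $\sum_{(l,k)}\alpha_{lk}\mathsf{MSE}_{lk}$ evaluated at $(\underline p^{(t)},\underline\psi^{(t)})$ is nonincreasing in $t$.
   Context: $L$ cells indexed by $l,i$, each with $K$ users indexed by $k,j$, $K\le\tau$; sums over $(i,j)$ or $(l,k)$ range over all $LK$ users. $M$ antennas per base station; noise variance $\sigma^2>0$; power budget $P_{\max}>0$; large-scale fading $\beta_{lij}>0$; weights $\alpha_{lk}>0$. $\{\varphi_1,\dots,\varphi_\tau\}\subset\mathbb C^\tau$ satisfy $\varphi_s^H\varphi_t=\tau$ if $s=t$ and $0$ otherwise. The feasible set $\mathcal F$ consists of $(\underline p,\underline\psi)$ with $0\le p_{lk}\le P_{\max}$, $\psi_{lk}\in\{\varphi_1,\dots,\varphi_\tau\}$, and $\psi_{lk}\ne\psi_{lk'}$ for $k\ne k'$. Pilot of user $(l,k)$ is $\phi_{lk}=\sqrt{p_{lk}}\psi_{lk}$. $D_l=\sigma^2I_\tau+\sum_{(i,j)}\beta_{lij}p_{ij}\psi_{ij}\psi_{ij}^H$; $\mathsf{MSE}_{lk}=M\beta_{llk}-M\beta_{llk}^2p_{lk}\psi_{lk}^HD_l^{-1}\psi_{lk}$;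 $f(\underline p,\underline\psi,\underline\mu)=\sum_{(l,k)}\alpha_{lk}\big(2\beta_{llk}\sqrt{p_{lk}}\Re\{\mu_{lk}^H\psi_{lk}\}-\mu_{lk}^HD_l\mu_{lk}\big)$ with $\mu_{lk}\in\mathbb C^\tau$. *)

(* Defs.v *)
(* The complex field is modelled by an arbitrary
   numClosedFieldType C (e.g. algC); real quantities are elements of C
   that are compared with the partial order of C (0 <= x forces x real). *)
From HB Require Import structures.
From mathcomp Require Import all_boot all_order all_algebra.
Set Implicit Arguments. Unset Strict Implicit. Unset Printing Implicit Defensive.
Import Order.TTheory GRing.Theory Num.Theory.
Local Open Scope ring_scope.

Section Pilot.
Variable C : numClosedFieldType.

Definition hermT (m n : nat) (A : 'M[C]_(m, n)) : 'M[C]_(n, m) :=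
  (map_mx Num.conj A)^T.

Definition qform (n : nat) (u : 'cV[C]_n) (A : 'M[C]_n) (v : 'cV[C]_n) : C :=
  (hermT u *m A *m v) 0 0.

Definition pilot_basis (tau : nat) (phi : 'I_tau -> 'cV[C]_tau) : Prop :=
  forall s t : 'I_tau,
    (hermT (phi s) *m phi t) 0 0 = if s == t then tau%:R else 0.

Definition feasible (L K tau : nat) (Pmax : C) (phi : 'I_tau -> 'cV[C]_tau)
    (p : 'I_L -> 'I_K -> C) (psi : 'I_L -> 'I_K -> 'cV[C]_tau) : Prop :=
  (forall l k, 0 <= p l k /\ p l k <= Pmax) /\
  (forall l k, exists s : 'I_tau, psi l k = phi s) /\
  (forall l k k', k != k' -> psi l k != psi l k').

Definition Dmat (L K tau : nat) (sigma2 : C) (beta : 'I_L -> 'I_L -> 'I_K -> C)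
    (p : 'I_L -> 'I_K -> C) (psi : 'I_L -> 'I_K -> 'cV[C]_tau) (l : 'I_L)
    : 'M[C]_tau :=
  sigma2%:M + \sum_(i < L) \sum_(j < K)
      (beta l i j * p i j) *: (psi i j *m hermT (psi i j)).

Definition MSE (L K tau M : nat) (sigma2 : C) (beta : 'I_L -> 'I_L -> 'I_K -> C)
    (p : 'I_L -> 'I_K -> C) (psi : 'I_L -> 'I_K -> 'cV[C]_tau) (l : 'I_L) (k : 'I_K)
    : C :=
  M%:R * beta l l k
  - M%:R * beta l l k ^+ 2 * p l k
    * qform (psi l k) (invmx (Dmat sigma2 beta p psi l)) (psi l k).

Definition WSMSE (L K tau M : nat) (sigma2 : C) (beta : 'I_L -> 'I_L -> 'I_K -> C)
    (alpha : 'I_L -> 'I_K -> C)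
    (p : 'I_L -> 'I_K -> C) (psi : 'I_L -> 'I_K -> 'cV[C]_tau) : C :=
  \sum_(l < L) \sum_(k < K) alpha l k * MSE M sigma2 beta p psi l k.

Definition fobj (L K tau : nat) (sigma2 : C) (beta : 'I_L -> 'I_L -> 'I_K -> C)
    (alpha : 'I_L -> 'I_K -> C)
    (p : 'I_L -> 'I_K -> C) (psi : 'I_L -> 'I_K -> 'cV[C]_tau)
    (mu : 'I_L -> 'I_K -> 'cV[C]_tau) : C :=
  \sum_(l < L) \sum_(k < K) alpha l k *
     (2 * beta l l k * sqrtC (p l k) * 'Re ((hermT (mu l k) *m psi l k) 0 0)
      - qform (mu l k) (Dmat sigma2 beta p psi l) (mu l k)).

Definition mu_update (L K tau : nat) (sigma2 : C) (beta : 'I_L -> 'I_L -> 'I_K -> C)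
    (p : 'I_L -> 'I_K -> C) (psi : 'I_L -> 'I_K -> 'cV[C]_tau)
    : 'I_L -> 'I_K -> 'cV[C]_tau :=
  fun l k => (beta l l k * sqrtC (p l k)) *: (invmx (Dmat sigma2 beta p psi l) *m psi l k).

End Pilot.

(* Main.v *)
From Pilot Require Import Defs.
From HB Require Import structures.
From mathcomp Require Import all_boot all_order all_algebra.
From mathcomp Require Import ring.
Set Implicit Arguments. Unset Strict Implicit. Unset Printing Implicit Defensive.
Import Order.TTheory GRing.Theory Num.Theory.
Local Open Scope ring_scope.

Section H.
Variable C : numClosedFieldType.

Lemma hermTM m n p (A : 'M[C]_(m, n)) (B : 'M[C]_(n, p)) :
  hermT (A *m B) = hermT B *m hermT A.
Proof. by rewrite /hermT map_mxM trmx_mul. Qed.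

Lemma hermTK m n (A : 'M[C]_(m, n)) : hermT (hermT A) = A.
Proof. by apply/matrixP => i j; rewrite /hermT !mxE conjCK. Qed.

Lemma hermTB m n (A B : 'M[C]_(m, n)) : hermT (A - B) = hermT A - hermT B.
Proof. by apply/matrixP => i j; rewrite /hermT !mxE rmorphB. Qed.

Lemma hermTD m n (A B : 'M[C]_(m, n)) : hermT (A + B) = hermT A + hermT B.
Proof. by apply/matrixP => i j; rewrite /hermT !mxE rmorphD. Qed.

Lemma hermTZ m n a (A : 'M[C]_(m, n)) : hermT (a *: A) = a^* *: hermT A.
Proof. by apply/matrixP => i j; rewrite /hermT !mxE rmorphM. Qed.

Lemma hermT_sum m n I (r : seq I) (F : I -> 'M[C]_(m, n)) :
  hermT (\sum_(i <- r) F i) = \sum_(i <- r) hermT (F i).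
Proof.
elim: r => [|x r IH]; last by rewrite !big_cons hermTD IH.
by rewrite !big_nil; apply/matrixP => i j; rewrite /hermT !mxE rmorph0.
Qed.

Lemma hermT_scalar n a : hermT (a%:M : 'M[C]_n) = a^*%:M.
Proof. by apply/matrixP => i j; rewrite /hermT !mxE eq_sym; case: (_ == _); rewrite ?mulr1n ?mulr0n ?rmorph0. Qed.

Definition dot n (u v : 'cV[C]_n) := (hermT u *m v) 0 0.

Lemma dotE n (u v : 'cV[C]_n) : dot u v = \sum_i (u i 0)^* * v i 0.
Proof. by rewrite /dot mxE; apply: eq_bigr => i _; rewrite /hermT !mxE. Qed.

Lemma dot_conj n (u v : 'cV[C]_n) : (dot u v)^* = dot v u.
Proof. by rewrite !dotE rmorph_sum; apply: eq_bigr => i _; rewrite rmorphM /= conjCK mulrC. Qed.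

Lemma dot_conj2 : True. Proof. by []. Qed.
Lemma dot_ge0 n (u : 'cV[C]_n) : 0 <= dot u u.
Proof. by rewrite dotE sumr_ge0 // => i _; rewrite mulrC mul_conjC_ge0. Qed.

Lemma dot_eq0 n (u : 'cV[C]_n) : dot u u = 0 -> u = 0.
Proof.
rewrite dotE => /eqP; rewrite psumr_eq0 => [/allP H|i _]; last by rewrite mulrC mul_conjC_ge0.
apply/matrixP => i j; rewrite ord1 mxE.
have := H i (mem_index_enum i); rewrite /= mulrC => /eqP h.
by have := mul_conjC_gt0 (u i 0); rewrite h ltxx => /esym/negbFE/eqP.
Qed.

Lemma qformE n (u v : 'cV[C]_n) A : qform u A v = dot u (A *m v).
Proof. by rewrite /qform /dot mulmxA. Qed.

Lemma dotBl n (u v w : 'cV[C]_n) : dot (u - v) w = dot u w - dot v w.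
Proof. by rewrite /dot hermTB mulmxBl !mxE. Qed.

Lemma dotBr n (u v w : 'cV[C]_n) : dot w (u - v) = dot w u - dot w v.
Proof. by rewrite /dot mulmxBr !mxE. Qed.

Lemma dot0r n (u : 'cV[C]_n) : dot u 0 = 0.
Proof. by rewrite /dot mulmx0 mxE. Qed.

Lemma herm_unit n (D : 'M[C]_n) : hermT D = D ->
  (forall z, dot z (D *m z) = 0 -> z = 0) -> D \in unitmx.
Proof.
move=> hD hz; rewrite unitmxE unitfE; apply/negP => /det0P [v nv vD].
have : D *m hermT v = 0.
  by rewrite -{1}hD -hermTM vD; apply/matrixP => i j; rewrite /hermT !mxE rmorph0.
move=> /(congr1 (dot (hermT v))); rewrite dot0r => /hz h.
by move/eqP: nv; apply; rewrite -(hermTK v) h; apply/matrixP => i j; rewrite /hermT !mxE rmorph0.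
Qed.

Lemma Re2 (w : C) : 2 * 'Re w = w + w^*.
Proof. by rewrite ReE mulrC divfK // pnatr_eq0. Qed.

Lemma key n (D : 'M[C]_n) (y mu : 'cV[C]_n) : hermT D = D -> D \in unitmx ->
  (forall z, 0 <= dot z (D *m z)) ->
  (2 * 'Re (dot mu y) - dot mu (D *m mu) <= dot y (invmx D *m y)) /\
  (2 * 'Re (dot (invmx D *m y) y) - dot (invmx D *m y) (D *m (invmx D *m y))
     = dot y (invmx D *m y)).
Proof.
move=> hD uD psd; set x := invmx D *m y.
have Dx : D *m x = y by rewrite /x mulKVmx.
have r0 := psd x; set r := dot x (D *m x) in r0.
have rR : r^* = r by apply: conj_Creal; apply: ger0_real.
have yx : dot y x = r by rewrite -dot_conj -Dx rR.
have xy : dot x y = r by rewrite /r Dx.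
rewrite yx xy; split; last first.
  by have /Creal_ReP -> := ger0_real r0; rewrite mulr_natl mulr2n addrK.
have := psd (mu - x); rewrite mulmxBr Dx dotBl !dotBr xy.
have -> : dot x (D *m mu) = (dot mu y)^*.
  by rewrite dot_conj -Dx /dot hermTM hD mulmxA.
rewrite Re2 => h; rewrite -subr_ge0.
set Q := dot mu (D *m mu) in h *; set w := dot mu y in h *.
have e : Q - w - (w^* - r) = r - (w + w^* - Q) by ring.
by move: h; rewrite e.
Qed.

Lemma dotZr n (u v : 'cV[C]_n) a : dot u (a *: v) = a * dot u v.
Proof. by rewrite /dot -scalemxAr mxE. Qed.

Lemma dotZl n (u v : 'cV[C]_n) a : dot (a *: u) v = a^* * dot u v.
Proof. by rewrite /dot hermTZ -scalemxAl mxE. Qed.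

Lemma yform n (D : 'M[C]_n) (c : C) (psi : 'cV[C]_n) : 0 <= c ->
  dot (c *: psi) (invmx D *m (c *: psi)) = c ^+ 2 * qform psi (invmx D) psi.
Proof.
move=> c0; rewrite -scalemxAr dotZr dotZl qformE conj_Creal ?ger0_real //.
by rewrite mulrA expr2.
Qed.

Lemma term_bound n (D : 'M[C]_n) (c : C) (psi mu : 'cV[C]_n) :
  hermT D = D -> D \in unitmx -> (forall z, 0 <= dot z (D *m z)) -> 0 <= c ->
  2 * c * 'Re ((hermT mu *m psi) 0 0) - qform mu D mu
  <= c ^+ 2 * qform psi (invmx D) psi.
Proof.
move=> hD uD psd c0; have [h _] := key (c *: psi) mu hD uD psd.
rewrite yform // in h; rewrite qformE; apply: le_trans h.
rewrite -mulrA -ReMl ?ger0_real //.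
by rewrite -dotZr.
Qed.

Lemma term_eq n (D : 'M[C]_n) (c : C) (psi : 'cV[C]_n) :
  hermT D = D -> D \in unitmx -> (forall z, 0 <= dot z (D *m z)) -> 0 <= c ->
  let mu := c *: (invmx D *m psi) in
  2 * c * 'Re ((hermT mu *m psi) 0 0) - qform mu D mu
  = c ^+ 2 * qform psi (invmx D) psi.
Proof.
move=> hD uD psd c0 mu; have [_ h] := key (c *: psi) 0 hD uD psd.
rewrite yform // in h; rewrite qformE -h /mu scalemxAr.
rewrite -mulrA -ReMl ?ger0_real //.
by rewrite -dotZr.
Qed.

Lemma dot_sumr n I (r : seq I) (u : 'cV[C]_n) (F : I -> 'cV[C]_n) :
  dot u (\sum_(i <- r) F i) = \sum_(i <- r) dot u (F i).
Proof.
elim: r => [|x r IH]; first by rewrite !big_nil dot0r.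
by rewrite !big_cons /dot mulmxDr mxE -IH.
Qed.

Lemma dot_Dmat L K tau sigma2 (beta : 'I_L -> 'I_L -> 'I_K -> C) p psi l (z : 'cV[C]_tau) :
  dot z (Dmat sigma2 beta p psi l *m z) =
  sigma2 * dot z z + \sum_(i < L) \sum_(j < K)
     (beta l i j * p i j) * (dot z (psi i j) * (dot z (psi i j))^*).
Proof.
rewrite /Dmat mulmxDl mul_scalar_mx /dot mulmxDr mxE -!/(dot _ _) dotZr; congr (_ + _).
rewrite mulmx_suml dot_sumr; apply: eq_bigr => i _.
rewrite mulmx_suml dot_sumr; apply: eq_bigr => j _.
rewrite -scalemxAl dotZr dot_conj; congr (_ * _).
by rewrite /dot -mulmxA mulmxA mxE big_ord1.
Qed.

Lemma Dmat_psd L K tau sigma2 (beta : 'I_L -> 'I_L -> 'I_K -> C) p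
   (psi : 'I_L -> 'I_K -> 'cV[C]_tau) l :
  0 < sigma2 -> (forall i j, 0 <= beta l i j * p i j) ->
  [/\ hermT (Dmat sigma2 beta p psi l) = Dmat sigma2 beta p psi l,
      Dmat sigma2 beta p psi l \in unitmx &
      forall z, 0 <= dot z (Dmat sigma2 beta p psi l *m z)].
Proof.
move=> s0 c0.
have psd : forall z, sigma2 * dot z z <= dot z (Dmat sigma2 beta p psi l *m z).
  move=> z; rewrite dot_Dmat lerDl; apply: sumr_ge0 => i _; apply: sumr_ge0 => j _.
  by apply: mulr_ge0 => //; apply: mul_conjC_ge0.
have psd' : forall z, 0 <= dot z (Dmat sigma2 beta p psi l *m z).
  by move=> z; apply: le_trans (psd z); apply: mulr_ge0; [apply: ltW|apply: dot_ge0].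
have hD : hermT (Dmat sigma2 beta p psi l) = Dmat sigma2 beta p psi l.
  rewrite /Dmat hermTD hermT_scalar conj_Creal ?gtr0_real //; congr (_ + _).
  rewrite hermT_sum; apply: eq_bigr => i _; rewrite hermT_sum; apply: eq_bigr => j _.
  by rewrite hermTZ hermTM hermTK conj_Creal ?ger0_real.
split=> //; apply: herm_unit => // z hz; apply: dot_eq0.
have := psd z; rewrite hz => h; apply/eqP; rewrite eq_le dot_ge0 andbT.
by rewrite -(pmulr_rle0 _ s0).
Qed.
End H.
Section M.
Variable C : numClosedFieldType.
Variables (L K tau M : nat) (sigma2 : C) (beta : 'I_L -> 'I_L -> 'I_K -> C)
  (alpha : 'I_L -> 'I_K -> C).
Hypothesis s0 : 0 < sigma2.
Hypothesis b0 : forall l i j, 0 < beta l i j.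
Hypothesis a0 : forall l k, 0 < alpha l k.

Definition gval (p : 'I_L -> 'I_K -> C) (psi : 'I_L -> 'I_K -> 'cV[C]_tau) :=
  \sum_(l < L) \sum_(k < K) alpha l k * ((beta l l k * sqrtC (p l k)) ^+ 2 *
     qform (psi l k) (invmx (Dmat sigma2 beta p psi l)) (psi l k)).

Variables (p : 'I_L -> 'I_K -> C) (psi : 'I_L -> 'I_K -> 'cV[C]_tau).
Hypothesis p0 : forall l k, 0 <= p l k.

Let DP l := @Dmat_psd C L K tau sigma2 beta p psi l s0 (fun i j => mulr_ge0 (ltW (b0 l i j)) (p0 i j)).
Let c0 l k : 0 <= beta l l k * sqrtC (p l k).
Proof. by rewrite mulr_ge0 ?sqrtC_ge0 ?p0 // ltW. Qed.

Lemma WS_eq : WSMSE M sigma2 beta alpha p psi =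
  \sum_(l < L) \sum_(k < K) alpha l k * (M%:R * beta l l k) - M%:R * gval p psi.
Proof.
rewrite /WSMSE /gval mulr_sumr -sumrB; apply: eq_bigr => l _.
rewrite mulr_sumr -sumrB; apply: eq_bigr => k _.
rewrite /MSE exprMn sqrtCK; ring.
Qed.

Lemma f_eq : fobj sigma2 beta alpha p psi (mu_update sigma2 beta p psi) = gval p psi.
Proof.
rewrite /fobj /gval; apply: eq_bigr => l _; apply: eq_bigr => k _; congr (_ * _).
have [h1 h2 h3] := DP l.
by rewrite -(mulrA 2); apply: (term_eq (psi l k) h1 h2 h3 (c0 l k)).
Qed.

Lemma f_le mu : fobj sigma2 beta alpha p psi mu <= gval p psi.
Proof.
rewrite /fobj /gval; apply: ler_sum => l _; apply: ler_sum => k _.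
rewrite ler_pM2l ?a0 //.
have [h1 h2 h3] := DP l.
by rewrite -(mulrA 2); apply: (term_bound (psi l k) (mu l k) h1 h2 h3 (c0 l k)).
Qed.
End M.
Unset Implicit Arguments.
Theorem proposition4 (C : numClosedFieldType) (L K tau M : nat)
  (sigma2 Pmax : C) (beta : 'I_L -> 'I_L -> 'I_K -> C) (alpha : 'I_L -> 'I_K -> C)
  (phi : 'I_tau -> 'cV[C]_tau)
  (pseq : nat -> 'I_L -> 'I_K -> C) (psiseq : nat -> 'I_L -> 'I_K -> 'cV[C]_tau) :
  (K <= tau)%N ->
  0 < sigma2 -> 0 < Pmax ->
  (forall l i j, 0 < beta l i j) ->
  (forall l k, 0 < alpha l k) ->
  pilot_basis phi ->
  feasible Pmax phi (pseq 0%N) (psiseq 0%N) ->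
  (forall t : nat,
     feasible Pmax phi (pseq t.+1) (psiseq t.+1) /\
     forall p psi, feasible Pmax phi p psi ->
       fobj sigma2 beta alpha p psi (mu_update sigma2 beta (pseq t) (psiseq t))
       <= fobj sigma2 beta alpha (pseq t.+1) (psiseq t.+1)
            (mu_update sigma2 beta (pseq t) (psiseq t))) ->
  forall t : nat,
    WSMSE M sigma2 beta alpha (pseq t.+1) (psiseq t.+1)
    <= WSMSE M sigma2 beta alpha (pseq t) (psiseq t).
Proof.
move=> _ s0 _ b0 a0 _ F0 H t.
have feas : forall t, feasible Pmax phi (pseq t) (psiseq t).
  by case=> [|t']; [exact: F0|exact: (H t').1].
have p0 : forall t' l k, 0 <= pseq t' l k by move=> t' l k; exact: ((feas t').1 l k).1.
rewrite !WS_eq.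
rewrite lerD2l lerN2 ler_wpM2l ?ler0n //.
rewrite -(f_eq alpha s0 b0 (psiseq t) (p0 t)).
apply: le_trans ((H t).2 _ _ (feas t)) _.
exact: f_le.
Qed.
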